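(* Let $G$ be a graph on $n\ge 1$ vertices. Then there exist disjoint subsets $S,T\subseteq V(G)$ such that $(S,T)$ realizes $\mu(G)$, $|S|\le (n+1)/2$, and $|T|=|S|-1$.
   Context: All graphs are finite and simple. For a graph $G=(V,E)$ on $n$ vertices, a fractional vertex cover is a function $f:V\to[0,\infty)$ with $f(u)+f(v)\ge 1$ for every edge $uv\in E$; $\tau^*(G)$ denotes the minimum of $\sum_{v\in V}f(v)$ over all fractional vertex covers. For $E'\subseteq E$ let $G-E'=(V,E\setminus E')$. Define $\mu(G)=\min\{|E'| : E'\subseteq E,\ \tau^*(G-E')<n/2\}$. For disjoint $S,T\subseteq V$, $E_G(S;V\setminus T)$ is the set of edges with both endpoints in $S$ or with one endpoint in $S$ and the other in $V\setminus(S\cup T)$. It holds that $\mu(G)=\min|E_G(S;V\setminus T)|$ over disjoint $S,T$ with $|S|>|T|$; a pair $(S,T)$ of disjoint subsets with $|S|>|T|$ and $|E_G(S;V\setminus T)|=\mu(G)$ is said to realize $\mu(G)$. *)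

(* Defs.v *)
From HB Require Import structures.
From mathcomp Require Import all_boot all_order all_algebra.
From mathcomp Require Import classical_sets boolp reals Rstruct.
Set Implicit Arguments. Unset Strict Implicit. Unset Printing Implicit Defensive.
Import Order.TTheory GRing.Theory Num.Theory.
Local Open Scope ring_scope.

(* A finite simple graph on vertex set V (a finType) is given by its edge set
   E : {set {set V}}, every edge being a 2-element set {u,v}. *)
Definition simple_edges (V : finType) (E : {set {set V}}) : Prop :=
  forall u, u \in E -> #|u| = 2%N.

Definition frac_cover (V : finType) (E : {set {set V}}) (f : V -> Rdefinitions.R) : Prop :=
  (forall v, (0 <= f v)%R) /\
  (forall x y, [set x; y] \in E -> (1 <= f x + f y)%R).

Definition tau_star (V : finType) (E : {set {set V}}) : Rdefinitions.R :=
  inf [set s : Rdefinitions.R | exists f : V -> Rdefinitions.R, frac_cover E f /\ s = (\sum_(v : V) f v)%R].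

(* The default value
   #|E| of the iterated min is attained by E' = E when n >= 1 (tau^* of the
   empty graph is 0), so this is exactly the minimum. *)
Definition mu (V : finType) (E : {set {set V}}) : nat :=
  (\big[minn/#|E|]_(E' : {set {set V}} |
       (E' \subset E) && `[< (tau_star (E :\: E') < (#|V|%:R / 2%:R))%R >]) #|E'|)%N.

(* E_G(S; V \ T): edges with both endpoints in S, or one endpoint in S and the
   other in V \ (S u T). *)
Definition E_G (V : finType) (E : {set {set V}}) (S T : {set V}) : {set {set V}} :=
  [set u in E | (u \subset S) ||
     [exists x in S, exists y in ~: (S :|: T), u == [set x; y]]].

Definition realizes (V : finType) (E : {set {set V}}) (S T : {set V}) : Prop :=
  [/\ [disjoint S & T], ltn #|T| #|S| & #|E_G E S T| = mu E].

(* Main.v *)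
Require Import Defs.
From HB Require Import structures.
From mathcomp Require Import all_boot all_order all_algebra.
From mathcomp Require Import classical_sets boolp reals Rstruct.
From mathcomp Require Import lra zify.
Set Implicit Arguments. Unset Strict Implicit. Unset Printing Implicit Defensive.
Import Order.TTheory GRing.Theory Num.Theory.
Local Open Scope ring_scope.
Notation RR := Rdefinitions.R.

Lemma bigmin_le (I : finType) (P : pred I) (F : I -> nat) x i0 : P i0 -> (\big[minn/x]_(i | P i) F i <= F i0)%N.
Proof.
move=> Pi0; have : i0 \in index_enum I by rewrite mem_index_enum.
elim: (index_enum I) => [|j r IH] //=.
rewrite inE big_cons; case/predU1P => [<-|/IH].
  by rewrite Pi0 geq_minl.
by case: (P j) => // h; rewrite geq_min h orbT.
Qed.
Lemma sum_ind (V : finType) (A : {set V}) : \sum_(v : V) ((v \in A)%:R : RR) = #|A|%:R.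
Proof.
rewrite (eq_bigr (fun v => if v \in A then 1 else 0)); last by move=> v _; case: (v \in A).
by rewrite -big_mkcond /= sumr_const.
Qed.

Lemma thresh (V : finType) (g : V -> RR) : \sum_v g v < 0 ->
  exists t : RR, 0 < t /\ (#|[set v | (t <= g v)%R]| < #|[set v | (g v <= - t)%R]|)%N.
Proof.
suff H: forall k (g : V -> RR), (#|[set v | (g v != 0)%R]| <= k)%N -> \sum_v g v < 0 ->
  exists t : RR, 0 < t /\ (#|[set v | (t <= g v)%R]| < #|[set v | (g v <= - t)%R]|)%N.
  by apply: (H _ g (leqnn _)).
elim=> [|k IH] {}g hk hs.
  have : \sum_v g v = 0.
    apply: big1 => v _; apply/eqP/negPn/negP => nz.
    move: hk; rewrite leqn0 cards_eq0 => /eqP e.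
    have : v \in [set v | (g v != 0)%R] by rewrite inE.
    by rewrite e inE.
  move=> e; rewrite e in hs; lra.
case: (pickP [pred v | g v != 0]) => [i0 hi0 | h0]; last first.
  have : \sum_v g v = 0.
    by apply: big1 => v _; apply/eqP/negPn/negP => nz; move: (h0 v); rewrite /= nz.
  move=> e; rewrite e in hs; lra.
have [i [hi hmin]] : exists i, g i != 0 /\ forall j, g j != 0 -> `|g i| <= `|g j|.
  case: (@arg_minP _ _ _ i0 [pred v | g v != 0] (fun j => `|g j|) hi0) => i hi hm.
  by exists i; split => // j hj; apply: hm.
set m : RR := `|g i|.
have m0 : 0 < m by rewrite normr_gt0.
set P := [set v | (m <= g v)%R].
set N := [set v | (g v <= - m)%R].
case: (ltnP #|P| #|N|) => hPN.
  by exists m.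
set g' : V -> RR := fun v => g v - m * (v \in P)%:R + m * (v \in N)%:R.
have hz : forall v, g v != 0 -> (v \in P) || (v \in N).
  move=> v /hmin; rewrite ler_normr /P /N !inE => /orP[->//|h]; rewrite -/m in h; apply/orP; right; lra.
have hs' : \sum_v g' v < 0.
  rewrite /g' big_split /= sumrB -!mulr_sumr !sum_ind.
  move: hPN; rewrite -(ler_nat RR) => hPN; nra.
have hk' : (#|[set v | (g' v != 0)%R]| <= k)%N.
  rewrite -ltnS; apply: leq_trans hk; apply: proper_card.
  apply/properP; split.
    apply/fintype.subsetP => v; rewrite !inE /g'; apply: contraNN => /eqP e.
    rewrite /P /N !inE e; have -> : (m <= 0) = false by apply/negbTE; rewrite -ltNge.
    have -> : (0 <= - m) = false by apply/negbTE; rewrite -ltNge; lra.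
    rewrite /=; apply/eqP; lra.
  exists i; first by rewrite inE.
  rewrite inE negbK /g' !inE.
  case: (real_ltgtP (num_real (g i)) (num_real 0)) hi => // hgi _.
    have e : m = - g i by rewrite /m ltr0_norm.
    have -> : (m <= g i) = false by apply/negbTE; rewrite -ltNge; lra.
    have -> : (g i <= - m) = true by apply/idP; lra.
    apply/eqP; rewrite /=; lra.
  have e : m = g i by rewrite /m gtr0_norm.
  have -> : (m <= g i) = true by apply/idP; lra.
  have -> : (g i <= - m) = false by apply/negbTE; rewrite -ltNge; lra.
  apply/eqP; rewrite /=; lra.
have [t [t0 ht]] := IH g' hk' hs'.
exists (t + m); split; first lra.
have e1 : [set v | (t <= g' v)%R] = [set v | (t + m <= g v)%R].
  apply/setP => v; rewrite !inE /g' !inE.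
  case: (boolP (g v == 0)) => [/eqP ->|nz].
    have -> : (m <= 0) = false by apply/negbTE; rewrite -ltNge.
    have -> : (0 <= - m) = false by apply/negbTE; rewrite -ltNge; lra.
    apply/idP/idP => /=; lra.
  have := hz v nz; rewrite !inE => /orP[h|h].
    have -> : (g v <= - m) = false by apply/negbTE; rewrite -ltNge; lra.
    rewrite h /=; apply/idP/idP; lra.
  have -> : (m <= g v) = false by apply/negbTE; rewrite -ltNge; lra.
  rewrite h /=; apply/idP/idP; lra.
have e2 : [set v | (g' v <= - t)%R] = [set v | (g v <= - (t + m))%R].
  apply/setP => v; rewrite !inE /g' !inE.
  case: (boolP (g v == 0)) => [/eqP ->|nz].
    have -> : (m <= 0) = false by apply/negbTE; rewrite -ltNge.
    have -> : (0 <= - m) = false by apply/negbTE; rewrite -ltNge; lra.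
    apply/idP/idP => /=; lra.
  have := hz v nz; rewrite !inE => /orP[h|h].
    have -> : (g v <= - m) = false by apply/negbTE; rewrite -ltNge; lra.
    rewrite h /=; apply/idP/idP; lra.
  have -> : (m <= g v) = false by apply/negbTE; rewrite -ltNge; lra.
  rewrite h /=; apply/idP/idP; lra.
by rewrite -e1 -e2.
Qed.

Lemma disjoint_mem (V : finType) (A B : {set V}) :
  (forall x, x \in A -> x \in B -> False) -> [disjoint A & B].
Proof.
move=> h; rewrite finset.disjoints_subset; apply/fintype.subsetP => x xA; rewrite inE.
by apply/negP => xB; exact: h x xA xB.
Qed.

Lemma cover_EG (V : finType) (E : {set {set V}}) (S T : {set V}) :
  [disjoint S & T] -> (#|T| < #|S|)%N -> tau_star (E :\: E_G E S T) < #|V|%:R / 2%:R.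
Proof.
move=> dST lt.
pose f : V -> RR := fun v => (1 + (v \in T)%:R - (v \in S)%:R) / 2.
have f0 : forall v, 0 <= f v.
  move=> v; rewrite /f; case: (v \in S); case: (v \in T); rewrite /=; lra.
have fc : frac_cover (E :\: E_G E S T) f.
  split=> // x y; rewrite !inE => /andP[notEG xyE].
  move: notEG; rewrite xyE /= negb_or => /andP[nsub nex].
  case xS: (x \in S); case xT: (x \in T); case yS: (y \in S); case yT: (y \in T);
    rewrite /f xS xT yS yT /=; try lra.
  all: try (by have := disjointFr dST xS; rewrite xT).
  all: try (by have := disjointFr dST yS; rewrite yT).
  all: try (by case/negP: nsub; rewrite finset.subUset !finset.sub1set xS yS).
  all: try (by case/negP: nex; apply/existsP; exists x; rewrite xS /=;
              apply/existsP; exists y; rewrite !inE yS yT eqxx).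
  all: try (by case/negP: nex; apply/existsP; exists y; rewrite yS /=;
              apply/existsP; exists x; rewrite !inE xS xT finset.setUC eqxx).
have hsum : \sum_v f v = (#|V|%:R + #|T|%:R - #|S|%:R) / 2.
  rewrite /f -mulr_suml sumrB big_split /= !sum_ind sumr_const.
  by rewrite -mulr_natr mul1r.
have hlt : (#|T|%:R : RR) < #|S|%:R by rewrite ltr_nat.
rewrite /tau_star; apply: (le_lt_trans (y := \sum_v f v)).
  apply: ge_inf.
    by exists 0 => y [g [[g0 _] ->]]; apply: sumr_ge0 => v _; exact: g0.
  by exists f.
rewrite hsum; lra.
Qed.

Lemma valid_EG (V : finType) (E : {set {set V}}) (E' : {set {set V}}) :
  simple_edges E -> tau_star (E :\: E') < #|V|%:R / 2%:R ->
  exists S T : {set V}, [/\ [disjoint S & T], (#|T| < #|S|)%N & E_G E S T \subset E'].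
Proof.
move=> sE ht.
have ne : ([set s : RR | exists f : V -> RR, frac_cover (E :\: E') f /\ s = (\sum_(v : V) f v)%R] !=set0)%classic.
  exists (\sum_(v : V) (1:RR)); exists (fun _ => 1); split=> //; split=> [v|x y _]; lra.
have [s [f [fc ->]] hs] := inf_lt ne ht.
pose g := fun v => f v - 1/2.
have hg : \sum_v g v < 0.
  rewrite /g sumrB sumr_const -mulr_natr.
  lra.
have [t [t0 ht']] := thresh hg.
exists [set v | (f v <= 1/2 - t)%R], [set v | (1/2 + t <= f v)%R]; split.
- apply: disjoint_mem => v; rewrite !inE => a b; lra.
- have e1 : [set v | (t <= g v)%R] = [set v | (1/2 + t <= f v)%R].
    by apply/setP => v; rewrite !inE /g; apply/idP/idP => h; lra.
  have e2 : [set v | (g v <= - t)%R] = [set v | (f v <= 1/2 - t)%R].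
    by apply/setP => v; rewrite !inE /g; apply/idP/idP => h; lra.
  by rewrite -e1 -e2.
- apply/fintype.subsetP => u; rewrite inE => /andP[uE].
  case: (boolP (u \in E')) => // nE' /orP[sub|ex]; exfalso.
    have uD : u \in E :\: E' by rewrite inE nE' uE.
    have /eqP/cards2P [x [y [_ uxy]]] := sE u uE.
    rewrite uxy in uD sub.
    have := fc.2 x y uD.
    move: sub; rewrite finset.subUset !finset.sub1set !inE => /andP[hx hy]; lra.
  case/existsP: ex => x /andP[hx /existsP[y /andP[hy /eqP uxy]]].
  have uD : u \in E :\: E' by rewrite inE nE' uE.
  rewrite uxy in uD; have := fc.2 x y uD.
  move: hx hy; rewrite !inE negb_or -!ltNge => hx /andP[hy1 hy2]; lra.
Qed.

Section Main.
Variables (V : finType) (E : {set {set V}}).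

Lemma EG_subE (S T : {set V}) : E_G E S T \subset E.
Proof. by apply/fintype.subsetP => u; rewrite inE => /andP[]. Qed.

Lemma mu_le (S T : {set V}) : [disjoint S & T] -> (#|T| < #|S|)%N -> (mu E <= #|E_G E S T|)%N.
Proof.
move=> d l; rewrite /mu; apply: (@bigmin_le _ _ (fun E' : {set {set V}} => #|E'|)).
rewrite EG_subE /=; apply/asboolP; exact: cover_EG.
Qed.

Lemma mu_attained : simple_edges E -> (0 < #|V|)%N ->
  exists S T : {set V}, [/\ [disjoint S & T], (#|T| < #|S|)%N & (#|E_G E S T| <= mu E)%N].
Proof.
move=> sE n0; rewrite /mu.
apply: (big_ind (fun y => exists S T : {set V}, [/\ [disjoint S & T], (#|T| < #|S|)%N & (#|E_G E S T| <= y)%N])).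
- exists [set: V]%SET, (finset.set0 : {set V}); split.
  + by apply: disjoint_mem => x _; rewrite inE.
  + by rewrite cards0 cardsT.
  + exact/subset_leq_card/EG_subE.
- move=> x y hx hy; case: (leqP x y) => h.
    by [].
  by [].
- move=> E' /andP[sub /asboolP ht].
  have [S [T [d l s]]] := valid_EG sE ht.
  by exists S, T; split=> //; exact: subset_leq_card.
Qed.

Lemma EG_sub_T (S T T' : {set V}) : T \subset T' -> E_G E S T' \subset E_G E S T.
Proof.
move=> sub; apply/fintype.subsetP => u; rewrite !inE => /andP[-> /orP[->//|]] /=.
case/existsP => x /andP[xS /existsP[y /andP[hy e]]].
apply/orP; right; apply/existsP; exists x; rewrite xS /=; apply/existsP; exists y.
rewrite e andbT; move: hy; rewrite !inE !negb_or => /andP[-> h] /=.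
by apply: contra h => /(fintype.subsetP sub).
Qed.

Lemma EG_sub_S (S T : {set V}) s : (forall v, v \in S :|: T) -> E_G E (S :\ s) T \subset E_G E S T.
Proof.
move=> hall; apply/fintype.subsetP => u; rewrite !inE => /andP[-> /orP[h|]] /=.
  by rewrite (fintype.subset_trans h (finset.subD1set _ _)).
case/existsP => x /andP[xS /existsP[y /andP[hy /eqP e]]].
apply/orP; left; rewrite e finset.subUset !finset.sub1set.
move: xS hy; rewrite !inE !negb_or => /andP[_ ->] /andP[h1 h2].
by have := hall y; rewrite inE (negbTE h2) orbF => ->.
Qed.

Lemma descend d : forall S T : {set V}, (#|S| - #|T|)%N = d.+1 -> [disjoint S & T] ->
  (#|E_G E S T| <= mu E)%N ->
  exists S' T' : {set V}, [/\ [disjoint S' & T'], #|T'| = (#|S'| - 1)%N,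
     (#|T'| < #|S'|)%N & (#|E_G E S' T'| <= mu E)%N].
Proof.
elim: d => [|d IH] S T hd dST hle.
  by exists S, T; split => //; lia.
case: (pickP [pred v | v \notin S :|: T]) => [v hv | hall].
  move: hv; rewrite /= !inE negb_or => /andP[vS vT].
  apply: (IH S (v |: T)).
  - rewrite cardsU1 vT /=; lia.
  - apply: disjoint_mem => x xS; rewrite !inE => /orP[/eqP xv|xT].
      by move: vS; rewrite -xv xS.
    by move: (disjointFr dST xS); rewrite xT.
  - apply: leq_trans hle; apply: subset_leq_card; apply: EG_sub_T.
    by apply/fintype.subsetP => x xT; rewrite !inE xT orbT.
have [s sS] : exists s, s \in S.
  by apply/card_gt0P; lia.
have hall' : forall v, v \in S :|: T by move=> v; apply/negbFE; exact: hall.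
apply: (IH (S :\ s) T).
- move: (cardsD1 s S); rewrite sS /=; lia.
- apply: disjoint_mem => x; rewrite !inE => /andP[_ xS] xT.
  by move: (disjointFr dST xS); rewrite xT.
- apply: leq_trans hle; apply: subset_leq_card; exact: EG_sub_S.
Qed.

End Main.

Local Close Scope ring_scope.

Theorem lemma16 (V : finType) (E : {set {set V}}) :
  simple_edges E -> (0 < #|V|)%N ->
  exists S T : {set V},
    [/\ [disjoint S & T], realizes E S T,
        ((#|S|%:R : Rdefinitions.R) <= (#|V|%:R + 1) / 2)%R & #|T| = (#|S| - 1)%N].
Proof.
move=> sE n0.
have [S [T [d l le]]] := mu_attained sE n0.
have hd : (#|S| - #|T|)%N = (#|S| - #|T|).-1.+1 by lia.
have [S' [T' [d' e' l' le']]] := descend hd d le.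
exists S', T'; split=> //.
  split=> //; apply/eqP; rewrite eqn_leq le' /=; exact: mu_le.
have hU : (#|S'| + #|T'| <= #|V|)%N.
  by rewrite -cardsUI (disjoint_setI0 d') cards0 addn0 max_card.
have h2 : (#|S'| * 2 <= #|V| + 1)%N by lia.
have : ((#|S'| * 2)%:R <= (#|V| + 1)%:R :> Rdefinitions.R)%R by rewrite ler_nat.
rewrite natrM natrD; lra.
Qed.
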